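(* Let $U$ be a rise function, $m\ge1$, $\varepsilon_r\ge0$ and $\sigma_r\ge0$ for $r\in\{1,\dots,m\}$, $\varepsilon=\sum_{r=1}^m\varepsilon_r$, $\sigma_l\ge0$, and let $\sigma_u\ge0$ be such that $\bigodot_{r=1}^m(S_{\sigma_r}\circ H_{\varepsilon_r})(\phi)\le H_\varepsilon\circ S_{\sigma_u}(\phi)$. Let $\psi\le\phi$, and assume all phases and pulse strengths occurring in the compositions below lie in the range where the defining condition of icpd/dcpd applies. If $U$ is icpd then $$S_{\sigma_l}\circ H_\varepsilon(\phi)-S_{\sigma_l}\circ H_\varepsilon(\psi)\le\bigodot_{r=1}^m(S_{\sigma_r}\circ H_{\varepsilon_r})(\phi)-\bigodot_{r=1}^m(S_{\sigma_r}\circ H_{\varepsilon_r})(\psi)\le H_\varepsilon\circ S_{\sigma_u}(\phi)-H_\varepsilon\circ S_{\sigma_u}(\psi).$$ If $U$ is dcpd then both inequalities hold with $\le$ replaced by $\ge$.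
   Context: A rise function is a smooth $U:[0,\infty)\to[0,\infty)$ with $U'>0$, $U(0)=0$, $U(1)=1$. $H_\varepsilon(\phi)=U^{-1}(U(\phi)+\varepsilon)$, $S_\sigma(\phi)=\phi+\sigma$, and $\bigodot_{r=1}^m(S_{\sigma_r}\circ H_{\varepsilon_r}):=S_{\sigma_m}\circ H_{\varepsilon_m}\circ\cdots\circ S_{\sigma_1}\circ H_{\varepsilon_1}$. Define $\Delta H(\phi,\Delta\phi,\varepsilon):=H_\varepsilon(\phi+\Delta\phi)-H_\varepsilon(\phi)$ on $\mathcal{D}=\{(\phi,\Delta\phi,\varepsilon):0\le\varepsilon\le1,\ 0\le\phi\le1,\ 0\le\Delta\phi\le U^{-1}(1-\varepsilon)-\phi\}$. $U$ is icpd (increasing the change of phase differences) if $\frac{\partial}{\partial\phi}\Delta H\ge0$ on $\mathcal{D}$, and dcpd (decreasing the change of phase differences) if $\frac{\partial}{\partial\phi}\Delta H\le0$ on $\mathcal{D}$. *)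

(* Defs.v *)
From Stdlib Require Import Reals Lra ClassicalEpsilon.
Open Scope R_scope.

(* U is smooth on [0,oo) (C^oo, via a tower of derivatives Dn with
   Dn 0 = U and D(n+1) the derivative of Dn at every x >= 0),
   U' > 0 on [0,oo), U maps [0,oo) into [0,oo), U(0)=0, U(1)=1. *)
Definition rise_function (U : R -> R) : Prop :=
  (exists Dn : nat -> R -> R,
      (forall x, Dn O x = U x) /\
      (forall (n : nat) (x : R), 0 <= x -> derivable_pt_lim (Dn n) x (Dn (S n) x)) /\
      (forall x, 0 <= x -> 0 < Dn 1%nat x)) /\
  (forall x, 0 <= x -> 0 <= U x) /\
  U 0 = 0 /\ U 1 = 1.

(* U^{-1}: the (unique, since U is strictly increasing) x >= 0 with U x = y;
   an arbitrary value if y is not in the range of U on [0,oo). *)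
Definition Uinv (U : R -> R) (y : R) : R :=
  epsilon (inhabits 0) (fun x => 0 <= x /\ U x = y).

Definition H (U : R -> R) (eps phi : R) : R := Uinv U (U phi + eps).

Definition Shift (sigma phi : R) : R := phi + sigma.

Fixpoint odot (U : R -> R) (eps sig : nat -> R) (n : nat) (phi : R) : R :=
  match n with
  | O => phi
  | S k => Shift (sig (S k)) (H U (eps (S k)) (odot U eps sig k phi))
  end.

Fixpoint sum1 (eps : nat -> R) (n : nat) : R :=
  match n with
  | O => 0
  | S k => sum1 eps k + eps (S k)
  end.

Definition DeltaH (U : R -> R) (phi dphi eps : R) : R :=
  H U eps (phi + dphi) - H U eps phi.

Definition inD (U : R -> R) (phi dphi eps : R) : Prop :=
  0 <= eps <= 1 /\ 0 <= phi <= 1 /\ 0 <= dphi <= Uinv U (1 - eps) - phi.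

(* icpd / dcpd: the partial derivative of Delta H in phi is >= 0 (resp. <= 0)
   on D (wherever it exists). *)
Definition icpd (U : R -> R) : Prop :=
  forall phi dphi eps l, inD U phi dphi eps ->
    derivable_pt_lim (fun x => DeltaH U x dphi eps) phi l -> 0 <= l.

Definition dcpd (U : R -> R) : Prop :=
  forall phi dphi eps l, inD U phi dphi eps ->
    derivable_pt_lim (fun x => DeltaH U x dphi eps) phi l -> l <= 0.

(* Main.v *)
Require Import Defs.
From Stdlib Require Import Reals Lra Lia Ranalysis5 ClassicalEpsilon FunctionalExtensionality.
Open Scope R_scope.

Lemma rise_D1 U : rise_function U -> exists D1 : R -> R,
  forall x, 0 <= x -> derivable_pt_lim U x (D1 x) /\ 0 < D1 x.
Proof.
  intros [[Dn [H0 [Hd Hp]]] _].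
  assert (E : Dn 0%nat = U) by (extensionality x; apply H0).
  exists (Dn 1%nat); intros x Hx; split; auto.
  rewrite <- E; apply Hd; auto.
Qed.

Lemma U_strict U : rise_function U -> forall x y, 0 <= x -> x < y -> U x < U y.
Proof.
  intros HU x y Hx Hxy. destruct (rise_D1 U HU) as [D1 HD].
  destruct (MVT_cor2 U D1 x y Hxy) as [c [Hc1 Hc2]].
  - intros c Hc; apply HD; lra.
  - assert (0 < D1 c) by (apply HD; lra).
    assert (0 < D1 c * (y - x)) by (apply Rmult_lt_0_compat; lra). lra.
Qed.

Lemma U_le U : rise_function U -> forall x y, 0 <= x -> x <= y -> U x <= U y.
Proof.
  intros HU x y Hx Hxy. destruct (Req_dec x y) as [->|]; [lra|].
  left; apply U_strict; auto; lra.
Qed.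

Lemma U_le_inv U : rise_function U -> forall x y, 0 <= x -> 0 <= y -> U x <= U y -> x <= y.
Proof.
  intros HU x y Hx Hy H. destruct (Rle_dec x y); auto.
  assert (U y < U x) by (apply U_strict; auto; lra). lra.
Qed.

Lemma U_cont U : rise_function U -> forall x, 0 <= x -> continuity_pt U x.
Proof.
  intros HU x Hx. destruct (rise_D1 U HU) as [D1 HD].
  apply derivable_continuous_pt. exists (D1 x). apply HD; auto.
Qed.

Lemma U_props U : rise_function U -> U 0 = 0 /\ U 1 = 1 /\ 1 < U 2 /\ (forall x, 0 <= x -> 0 <= U x).
Proof.
  intros HU. pose proof HU as [_ [Hn [H0 H1]]]. repeat split; auto.
  rewrite <- H1. apply U_strict; auto; lra.
Qed.

Lemma U_surj U : rise_function U -> forall y M, 0 <= M -> 0 <= y <= U M ->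
  exists x, 0 <= x <= M /\ U x = y.
Proof.
  intros HU y M HM Hy. destruct (U_props U HU) as [H0 [H1 [H2 Hn]]].
  destruct (Req_dec y 0) as [->|Hy0]. { exists 0; split; auto; lra. }
  destruct (Req_dec y (U M)) as [->|HyM]. { exists M; split; auto; lra. }
  assert (0 < y) by (destruct Hy as [[?|?] ?]; [lra| exfalso; apply Hy0; auto]).
  assert (y < U M) by (destruct Hy as [? [?|?]]; [lra| exfalso; apply HyM; auto]).
  assert (0 < M). { destruct (Req_dec M 0) as [->|]; [rewrite H0 in *; lra| lra]. }
  destruct (IVT_interv (fun t => U t - y) 0 M) as [z [Hz1 Hz2]].
  - intros a Ha. apply continuity_pt_minus with (f1 := U) (f2 := fct_cte y).
    + apply (U_cont U HU); lra.
    + apply continuity_pt_const; intros ? ?; reflexivity.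
  - auto.
  - lra.
  - lra.
  - exists z; split; [lra|]. lra.
Qed.

Lemma Uinv_spec U : rise_function U -> forall y, 0 <= y <= U 2 ->
  0 <= Uinv U y /\ U (Uinv U y) = y.
Proof.
  intros HU y Hy. unfold Uinv. apply epsilon_spec.
  destruct (U_surj U HU y 2) as [x [Hx1 Hx2]]; [lra|auto|].
  exists x; split; [lra|auto].
Qed.

Lemma Uinv_U U : rise_function U -> forall x, 0 <= x -> Uinv U (U x) = x.
Proof.
  intros HU x Hx.
  assert (Hs : 0 <= Uinv U (U x) /\ U (Uinv U (U x)) = U x).
  { unfold Uinv. apply epsilon_spec. exists x; auto. }
  destruct Hs as [Hs1 Hs2].
  apply Rle_antisym; apply (U_le_inv U HU); auto; lra.
Qed.

Lemma Uinv_le U : rise_function U -> forall y1 y2, 0 <= y1 -> y1 <= y2 -> y2 <= U 2 ->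
  Uinv U y1 <= Uinv U y2.
Proof.
  intros HU y1 y2 H1 H2 H3.
  destruct (Uinv_spec U HU y1) as [A1 B1]; [lra|].
  destruct (Uinv_spec U HU y2) as [A2 B2]; [lra|].
  apply (U_le_inv U HU); auto; lra.
Qed.


Lemma Uinv_cont U : rise_function U -> forall y, 0 < y < U 2 -> continuity_pt (Uinv U) y.
Proof.
  intros HU y Hy. destruct (U_props U HU) as [H0 [H1 [H2 Hn]]].
  apply (continuity_pt_recip_interv U (Uinv U) 0 2 ltac:(lra)).
  - intros; apply (U_strict U HU); lra.
  - intros x Hx1 Hx2. unfold comp, id. apply (Uinv_spec U HU). rewrite H0 in Hx1; lra.
  - intros x Hx1 Hx2. rewrite H0 in Hx1.
    destruct (Uinv_spec U HU x) as [A B]; [lra|]. split; auto.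
    rewrite <- (Uinv_U U HU 2) by lra. apply (Uinv_le U HU); lra.
  - intros; apply (U_cont U HU); lra.
  - rewrite H0; auto.
Qed.

Lemma Uinv_deriv U : rise_function U -> forall y, 0 < y < U 2 ->
  exists l, derivable_pt_lim (Uinv U) y l.
Proof.
  intros HU y Hy. destruct (U_props U HU) as [H0 [H1 [H2 Hn]]].
  destruct (rise_D1 U HU) as [D1 HD].
  assert (Hlb : 0 <= Uinv U 0) by (apply (Uinv_spec U HU); lra).
  assert (Prf : forall a, Uinv U 0 <= a <= Uinv U (U 2) -> derivable_pt U a).
  { intros a Ha. exists (D1 a). apply HD. lra. }
  assert (Hinc : Uinv U 0 <= Uinv U y <= Uinv U (U 2)).
  { split; apply (Uinv_le U HU); lra. }
  eexists. apply (derivable_pt_lim_recip_interv U (Uinv U) 0 (U 2) y Prf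
     (Uinv_cont U HU y Hy) ltac:(lra) Hy Hinc).
  - intros x Hx. unfold comp, id. apply (Uinv_spec U HU); lra.
  - destruct (Uinv_spec U HU y) as [A B]; [lra|].
    rewrite (derive_pt_eq_0 U (Uinv U y) (D1 (Uinv U y))).
    + assert (0 < D1 (Uinv U y)) by (apply HD; auto). lra.
    + apply HD; auto.
Qed.


Lemma H_deriv U e d p : rise_function U -> 0 <= p + d -> 0 < U (p + d) + e < U 2 ->
  exists l, derivable_pt_lim (fun x => H U e (x + d)) p l.
Proof.
  intros HU Hp Hr. destruct (rise_D1 U HU) as [D1 HD].
  destruct (Uinv_deriv U HU (U (p + d) + e) Hr) as [l Hl].
  assert (Hin : derivable_pt_lim (fun x => U (x + d) + e) p (D1 (p + d) * 1 + 0)).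
  { apply (derivable_pt_lim_plus (comp U (fun x => x + d)) (fct_cte e)).
    - apply (derivable_pt_lim_comp (fun x => x + d) U).
      + apply (derivable_pt_lim_plus id (fct_cte d) p 1 0 (derivable_pt_lim_id p) (derivable_pt_lim_const d p)) ||
        (replace 1 with (1 + 0) by ring;
         apply (derivable_pt_lim_plus id (fct_cte d) p 1 0 (derivable_pt_lim_id p) (derivable_pt_lim_const d p))).
      + apply HD; auto.
    - apply derivable_pt_lim_const. }
  exists (l * (D1 (p + d) * 1 + 0)).
  apply (derivable_pt_lim_comp (fun x => U (x + d) + e) (Uinv U) p _ _ Hin Hl).
Qed.

Lemma DH_deriv U e d p : rise_function U -> 0 <= p -> 0 <= d ->
  0 < U p + e -> U (p + d) + e < U 2 ->
  exists l, derivable_pt_lim (fun x => DeltaH U x d e) p l.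
Proof.
  intros HU Hp Hd H1 H2.
  assert (Hpd : U p <= U (p + d)) by (apply (U_le U HU); lra).
  destruct (H_deriv U e d p HU) as [l1 Hl1]; [lra|lra|].
  destruct (H_deriv U e 0 p HU) as [l2 Hl2]; [lra|rewrite Rplus_0_r; lra|].
  exists (l1 - l2).
  assert (E : (fun x => H U e (x + 0)) = H U e).
  { extensionality x; rewrite Rplus_0_r; auto. }
  rewrite E in Hl2.
  apply (derivable_pt_lim_minus (fun x => H U e (x + d)) (H U e) p l1 l2 Hl1 Hl2).
Qed.

Definition rel (b : bool) (x y : R) : Prop := if b then x <= y else y <= x.
Definition cond (b : bool) (U : R -> R) : Prop := if b then icpd U else dcpd U.

Lemma mono_from_deriv (b : bool) (f : R -> R) a c :
  a < c -> (forall x, a <= x <= c -> exists l, derivable_pt_lim f x l) ->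
  (forall x l, a < x < c -> derivable_pt_lim f x l -> rel b 0 l) ->
  rel b (f a) (f c).
Proof.
  intros Hac Hd Hs.
  assert (pr1 : forall x, a < x < c -> derivable_pt f x).
  { intros x Hx. destruct (constructive_indefinite_description _ (Hd x ltac:(lra))) as [l Hl].
    exists l; exact Hl. }
  assert (Hc : forall x, a <= x <= c -> continuity_pt f x).
  { intros x Hx. destruct (constructive_indefinite_description _ (Hd x Hx)) as [l Hl].
    apply derivable_continuous_pt. exists l; exact Hl. }
  destruct (MVT f id a c pr1 (fun x _ => derivable_pt_id x) Hac Hc
     (fun x _ => derivable_continuous_pt id x (derivable_pt_id x))) as [x [P HP]].
  rewrite derive_pt_id in HP. unfold id in HP.
  assert (Hl := Hs x _ P (derive_pt_eq_1 f x _ (pr1 x P) eq_refl)).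
  unfold rel in *; destruct b; nra.
Qed.


Lemma HS U e x : rise_function U -> 0 <= x -> 0 <= e -> U x + e <= 1 ->
  0 <= H U e x /\ U (H U e x) = U x + e.
Proof.
  intros HU Hx He Hr. destruct (U_props U HU) as [H0 [H1 [H2 Hn]]].
  assert (Hx0 : 0 <= U x) by auto.
  unfold Defs.H. apply (Uinv_spec U HU); lra.
Qed.

Lemma H0 U x : rise_function U -> 0 <= x -> H U 0 x = x.
Proof. intros HU Hx. unfold Defs.H. rewrite Rplus_0_r. apply (Uinv_U U HU); auto. Qed.

Lemma Hcomp U e1 e2 x : rise_function U -> 0 <= x -> 0 <= e1 -> 0 <= e2 ->
  U x + (e1 + e2) <= 1 -> H U e2 (H U e1 x) = H U (e1 + e2) x.
Proof.
  intros HU Hx H1 H2 Hr. destruct (HS U e1 x HU) as [A B]; auto; try lra.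
  unfold Defs.H at 1. rewrite B. unfold Defs.H. f_equal. ring.
Qed.

Lemma Hle U e u v : rise_function U -> 0 <= u -> u <= v -> 0 <= e -> U v + e <= 1 ->
  H U e u <= H U e v.
Proof.
  intros HU Hu Huv He Hr. destruct (U_props U HU) as [H0 [H1 [H2 Hn]]].
  assert (Huv2 : U u <= U v) by (apply (U_le U HU); lra).
  assert (Hu0 : 0 <= U u) by auto.
  unfold Defs.H; apply (Uinv_le U HU); lra.
Qed.

Lemma Hlt_lem U e u v : rise_function U -> 0 <= u -> u < v -> 0 <= e -> U v + e <= 1 ->
  H U e u < H U e v.
Proof.
  intros HU Hu Huv He Hr.
  assert (Huv2 : U u < U v) by (apply (U_strict U HU); lra).
  destruct (HS U e u HU) as [A1 B1]; auto; try lra.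
  destruct (HS U e v HU) as [A2 B2]; auto; try lra.
  destruct (Rlt_le_dec (H U e u) (H U e v)) as [|Hc]; auto.
  apply (U_le U HU) in Hc; auto. lra.
Qed.

Lemma Hrel_lem b U e u v : rise_function U -> 0 <= u -> 0 <= v -> 0 <= e ->
  U u + e <= 1 -> U v + e <= 1 -> rel b u v -> rel b (H U e u) (H U e v).
Proof.
  intros HU Hu Hv He Hru Hrv Hb. unfold rel in *; destruct b; apply (Hle U); auto.
Qed.

Lemma le1 U z : rise_function U -> 0 <= z -> U z <= 1 -> z <= 1.
Proof.
  intros HU Hz Hr. destruct (U_props U HU) as [H0 [H1 [H2 Hn]]].
  apply (U_le_inv U HU); lra.
Qed.

Lemma le_Uinv U z y : rise_function U -> 0 <= z -> y <= 1 -> U z <= y -> z <= Uinv U y.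
Proof.
  intros HU Hz Hy Hr. destruct (U_props U HU) as [H0 [H1 [H2 Hn]]].
  assert (Hz0 : 0 <= U z) by auto.
  rewrite <- (Uinv_U U HU z) by auto. apply (Uinv_le U HU); lra.
Qed.

Lemma Uinv_le_U U z y : rise_function U -> 0 <= z -> 0 <= y <= 1 -> z <= Uinv U y -> U z <= y.
Proof.
  intros HU Hz Hy Hr. destruct (U_props U HU) as [H0 [H1 [H2 Hn]]].
  destruct (Uinv_spec U HU y) as [A B]; [lra|].
  rewrite <- B. apply (U_le U HU); auto.
Qed.

Lemma mono_pos b U e a c d : rise_function U -> cond b U -> 0 <= e <= 1 ->
  0 <= a -> a <= c -> c <= 1 -> 0 <= d -> c + d <= Uinv U (1 - e) ->
  rel b (DeltaH U a d e) (DeltaH U c d e).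
Proof.
  intros HU Hb He Ha Hac Hc Hd Hcd. destruct (U_props U HU) as [H0' [H1 [H2 Hn]]].
  destruct (Req_dec a c) as [<-|Hne]. { unfold rel; destruct b; lra. }
  destruct (Req_dec e 0) as [->|He0].
  { unfold DeltaH. rewrite !(H0 U) by (auto; lra). unfold rel; destruct b; lra. }
  apply (mono_from_deriv b (fun x => DeltaH U x d e) a c); [lra| |].
  - intros x Hx. apply DH_deriv; auto; try lra.
    + assert (0 <= U x) by (apply Hn; lra). lra.
    + assert (U (x + d) <= 1 - e) by (apply (Uinv_le_U U (x + d) (1 - e) HU); lra). lra.
  - intros x l Hx Hl. unfold cond, rel in *.
    assert (HD : inD U x d e) by (unfold inD; repeat split; lra).
    destruct b; [apply (Hb x d e l HD Hl) | apply (Hb x d e l HD Hl)].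
Qed.


Lemma sum1_nonneg eps m : (forall r, (1 <= r <= m)%nat -> 0 <= eps r) ->
  forall r, (r <= m)%nat -> 0 <= sum1 eps r.
Proof.
  intros He r. induction r; intros Hr; simpl; [lra|].
  assert (0 <= sum1 eps r) by (apply IHr; lia).
  assert (0 <= eps (S r)) by (apply He; lia). lra.
Qed.

Lemma sum1_le eps m : (forall r, (1 <= r <= m)%nat -> 0 <= eps r) ->
  forall r, (r <= m)%nat -> sum1 eps r <= sum1 eps m.
Proof.
  intros He.
  assert (K : forall k r, (r + k = m)%nat -> sum1 eps r <= sum1 eps m).
  { induction k; intros r Hr.
    - replace r with m by lia. lra.
    - assert (sum1 eps (S r) <= sum1 eps m) by (apply IHk; lia).
      simpl in H. assert (0 <= eps (S r)) by (apply He; lia). lra. }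
  intros r Hr. apply (K (m - r)%nat). lia.
Qed.

Lemma main_rel (b : bool) (U : R -> R) (m : nat) (eps sig : nat -> R)
  (sigma_u phi psi : R) :
  rise_function U ->
  (1 <= m)%nat ->
  (forall r, (1 <= r <= m)%nat -> 0 <= eps r) ->
  (forall r, (1 <= r <= m)%nat -> 0 <= sig r) ->
  0 <= sigma_u ->
  odot U eps sig m phi <= H U (sum1 eps m) (Shift sigma_u phi) ->
  psi <= phi ->
  inD U psi (phi - psi) (sum1 eps m) ->
  (forall r, (1 <= r <= m)%nat ->
     inD U (odot U eps sig (r - 1) psi)
           (odot U eps sig (r - 1) phi - odot U eps sig (r - 1) psi) (eps r)) ->
  inD U (Shift sigma_u psi) (Shift sigma_u phi - Shift sigma_u psi) (sum1 eps m) ->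
  cond b U ->
  rel b (H U (sum1 eps m) phi - H U (sum1 eps m) psi)
        (odot U eps sig m phi - odot U eps sig m psi) /\
  rel b (odot U eps sig m phi - odot U eps sig m psi)
        (H U (sum1 eps m) (Shift sigma_u phi) - H U (sum1 eps m) (Shift sigma_u psi)).
Proof.
  intros HU Hm Heps Hsig Hsu Hdom Hpp Hin0 Hinr Hinu Hb.
  destruct (U_props U HU) as [HU0 [HU1 [HU2 Hn]]].
  unfold inD, Shift in Hin0, Hinu. unfold Shift in Hdom |- *.
  destruct Hin0 as [[He0 He1] [[Hp0 Hp1] [_ Hd1]]].
  destruct Hinu as [_ [[Hu0 Hu1] [_ Hud1]]].
  set (ep := sum1 eps m) in *.
  assert (Hphi : U phi + ep <= 1).
  { assert (U phi <= 1 - ep) by (apply (Uinv_le_U U phi (1 - ep) HU); lra). lra. }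
  assert (Hphiu : U (phi + sigma_u) + ep <= 1).
  { assert (U (phi + sigma_u) <= 1 - ep) by (apply (Uinv_le_U U (phi + sigma_u) (1 - ep) HU); lra). lra. }
  assert (Hpsi : U psi <= U phi) by (apply (U_le U HU); lra).
  assert (Hpsiu : U (psi + sigma_u) <= U (phi + sigma_u)) by (apply (U_le U HU); lra).
  assert (HE0 : forall r, (r <= m)%nat -> 0 <= sum1 eps r) by (apply sum1_nonneg; auto).
  assert (HEm : forall r, (r <= m)%nat -> sum1 eps r <= ep) by (apply sum1_le; auto).
  assert (Hr' : forall r, (r < m)%nat ->
     0 <= eps (S r) <= 1 /\ 0 <= odot U eps sig r psi <= 1 /\
     0 <= odot U eps sig r phi - odot U eps sig r psi /\
     odot U eps sig r phi <= Uinv U (1 - eps (S r)) /\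
     U (odot U eps sig r phi) + eps (S r) <= 1).
  { intros r Hr. pose proof (Hinr (S r) ltac:(lia)) as Hi.
    replace (S r - 1)%nat with r in Hi by lia.
    unfold inD in Hi. destruct Hi as [Hi1 [Hi2 [Hi3 Hi4]]].
    assert (U (odot U eps sig r phi) <= 1 - eps (S r))
      by (apply (Uinv_le_U U _ _ HU); lra).
    repeat split; lra. }
  split.
  -
    assert (L : forall r, (r <= m)%nat ->
      0 <= H U (sum1 eps r) psi <= odot U eps sig r psi /\
      rel b (H U (sum1 eps r) phi - H U (sum1 eps r) psi)
            (odot U eps sig r phi - odot U eps sig r psi)).
    { induction r; intros Hr.
      - simpl. rewrite !(H0 U) by (auto; lra). split; [lra|]. unfold rel; destruct b; lra.
      - destruct (IHr ltac:(lia)) as [[Ha0 Hax] Hrel].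
        destruct (Hr' r ltac:(lia)) as [He [Hx [HD [Hxphi HUx]]]].
        assert (Er0 := HE0 r ltac:(lia)).
        assert (Erm := HEm (S r) Hr). simpl sum1 in Erm.
        assert (Hsr : 0 <= sig (S r)) by (apply Hsig; lia).
        set (e := eps (S r)) in *. set (Er := sum1 eps r) in *.
        set (xp := odot U eps sig r psi) in *. set (xf := odot U eps sig r phi) in *.
        set (a := H U Er psi) in *.
        destruct (HS U Er phi HU) as [Hf0 Hf1]; try lra.
        destruct (HS U Er psi HU) as [Hs0 Hs1]; try lra.
        change (H U Er psi) with a in Hs0, Hs1.
        assert (St1 := mono_pos b U e a xp (xf - xp) HU Hb ltac:(lra) Ha0 Hax ltac:(lra) HD ltac:(lra)).
        assert (HUa : U (a + (xf - xp)) <= U xf) by (apply (U_le U HU); lra).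
        assert (St2 : rel b (H U e (H U Er phi)) (H U e (a + (xf - xp)))).
        { apply Hrel_lem; auto; try lra. unfold rel in *; destruct b; lra. }
        assert (Hc1 : H U e (H U Er phi) = H U (Er + e) phi) by (apply Hcomp; auto; lra).
        assert (Hc2 : H U e a = H U (Er + e) psi) by (apply Hcomp; auto; lra).
        assert (Hle1 : H U e a <= H U e xp).
        { assert (U xp <= U xf) by (apply (U_le U HU); lra). apply Hle; auto; lra. }
        assert (HUax : U a <= U xp) by (apply (U_le U HU); lra). assert (U xp <= U xf) by (apply (U_le U HU); lra).
        destruct (HS U e a HU) as [Ha'0 _]; auto; try lra.
        simpl. fold e. fold Er. fold xp. fold xf. unfold Shift.
        rewrite <- Hc1, <- Hc2. split; [lra|].
        unfold DeltaH in St1. replace (xp + (xf - xp)) with xf in St1 by ring.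
        unfold rel in *; destruct b; lra. }
    apply L; lia.
  -
    set (z := fun r x => H U (sum1 eps r) (x + sigma_u)).
    assert (Dom : forall k r, (r + k = m)%nat -> z r phi < odot U eps sig r phi ->
                  z m phi < odot U eps sig m phi).
    { induction k; intros r Hr Hlt.
      - replace m with r by lia. auto.
      - apply (IHk (S r)); [lia|].
        destruct (Hr' r ltac:(lia)) as [He [Hx [HD [Hxphi HUx]]]].
        assert (Er0 := HE0 r ltac:(lia)).
        assert (Erm := HEm (S r) ltac:(lia)). simpl sum1 in Erm.
        assert (Hsr : 0 <= sig (S r)) by (apply Hsig; lia).
        unfold z in *. simpl sum1. simpl odot. unfold Shift.
        destruct (HS U (sum1 eps r) (phi + sigma_u) HU) as [Hz0 Hz1]; try lra.
        rewrite <- Hcomp by (auto; lra).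
        assert (H U (eps (S r)) (H U (sum1 eps r) (phi + sigma_u)) <
                H U (eps (S r)) (odot U eps sig r phi)) by (apply Hlt_lem; auto; lra).
        lra. }
    assert (Hxz : forall r, (r <= m)%nat -> odot U eps sig r phi <= z r phi).
    { intros r Hr. destruct (Rle_dec (odot U eps sig r phi) (z r phi)) as [|Hc]; auto.
      exfalso. assert (z m phi < odot U eps sig m phi) by (apply (Dom (m - r)%nat r); lia || lra).
      unfold z in H. fold ep in H. lra. }
    assert (Up : forall r, (r <= m)%nat ->
      rel b (odot U eps sig r phi - odot U eps sig r psi) (z r phi - z r psi)).
    { induction r; intros Hr.
      - unfold z; simpl. rewrite !(H0 U) by (auto; lra). unfold rel; destruct b; lra.
      - assert (Hrel := IHr ltac:(lia)).
        destruct (Hr' r ltac:(lia)) as [He [Hx [HD [Hxphi HUx]]]].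
        assert (Er0 := HE0 r ltac:(lia)).
        assert (Erm := HEm (S r) Hr). simpl sum1 in Erm.
        assert (Hxz' := Hxz r ltac:(lia)).
        unfold z in *. simpl sum1. simpl odot. unfold Shift.
        set (e := eps (S r)) in *. set (Er := sum1 eps r) in *.
        set (xp := odot U eps sig r psi) in *. set (xf := odot U eps sig r phi) in *.
        destruct (HS U Er (phi + sigma_u) HU) as [Hf0 Hf1]; try lra.
        destruct (HS U Er (psi + sigma_u) HU) as [Hs0 Hs1]; try lra.
        set (zf := H U Er (phi + sigma_u)) in *. set (zp := H U Er (psi + sigma_u)) in *.
        rewrite <- !Hcomp by (auto; lra). fold zf zp.
        assert (Hzf1 : zf <= 1) by (apply (le1 U zf HU); lra).
        assert (Hzfu : zf <= Uinv U (1 - e)) by (apply (le_Uinv U zf (1 - e) HU); lra).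
        assert (Hzpf : U zp <= U zf) by lra.
        assert (Hzpf' : zp <= zf) by (apply (U_le_inv U HU); lra).
        assert (St1 := mono_pos b U e xp (zf - (xf - xp)) (xf - xp) HU Hb ltac:(lra) ltac:(lra) ltac:(lra) ltac:(lra) HD ltac:(lra)).
        assert (HUc : U (zf - (xf - xp)) <= U zf) by (apply (U_le U HU); lra).
        assert (St2 : rel b (H U e zp) (H U e (zf - (xf - xp)))).
        { apply Hrel_lem; auto; try lra. unfold rel in *; destruct b; lra. }
        unfold DeltaH in St1.
        replace (xp + (xf - xp)) with xf in St1 by ring.
        replace (zf - (xf - xp) + (xf - xp)) with zf in St1 by ring.
        unfold rel in *; destruct b; lra. }
    apply Up; lia.
Qed.

Theorem mainTheorem5 (U : R -> R) (m : nat) (eps sig : nat -> R)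
  (sigma_l sigma_u phi psi : R) :
  rise_function U ->
  (1 <= m)%nat ->
  (forall r, (1 <= r <= m)%nat -> 0 <= eps r) ->
  (forall r, (1 <= r <= m)%nat -> 0 <= sig r) ->
  0 <= sigma_l ->
  0 <= sigma_u ->
  odot U eps sig m phi <= H U (sum1 eps m) (Shift sigma_u phi) ->
  psi <= phi ->
  inD U psi (phi - psi) (sum1 eps m) ->
  (forall r, (1 <= r <= m)%nat ->
     inD U (odot U eps sig (r - 1) psi)
           (odot U eps sig (r - 1) phi - odot U eps sig (r - 1) psi) (eps r)) ->
  inD U (Shift sigma_u psi) (Shift sigma_u phi - Shift sigma_u psi) (sum1 eps m) ->
  (icpd U ->
     Shift sigma_l (H U (sum1 eps m) phi) - Shift sigma_l (H U (sum1 eps m) psi)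
       <= odot U eps sig m phi - odot U eps sig m psi /\
     odot U eps sig m phi - odot U eps sig m psi
       <= H U (sum1 eps m) (Shift sigma_u phi) - H U (sum1 eps m) (Shift sigma_u psi)) /\
  (dcpd U ->
     Shift sigma_l (H U (sum1 eps m) phi) - Shift sigma_l (H U (sum1 eps m) psi)
       >= odot U eps sig m phi - odot U eps sig m psi /\
     odot U eps sig m phi - odot U eps sig m psi
       >= H U (sum1 eps m) (Shift sigma_u phi) - H U (sum1 eps m) (Shift sigma_u psi)).
Proof.
  intros HU Hm Heps Hsig Hsl Hsu Hdom Hpp Hin0 Hinr Hinu. split; intros Hc.
  - destruct (main_rel true U m eps sig sigma_u phi psi HU Hm Heps Hsig Hsu Hdom Hpp Hin0 Hinr Hinu Hc) as [A B].
    unfold rel, Shift in *. split; lra.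
  - destruct (main_rel false U m eps sig sigma_u phi psi HU Hm Heps Hsig Hsu Hdom Hpp Hin0 Hinr Hinu Hc) as [A B].
    unfold rel, Shift in *. split; lra.
Qed.
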